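(* Let $K$ be a finite simplicial complex, let $q$ and $p$ be non-negative integers, and for each $m$ let $\{\sigma^{(m)}_1,\dots,\sigma^{(m)}_{f_m}\}$ be the $m$-simplices of $K$ ($f_m$ their number). Then for every $q$-simplex $\sigma_j^{(q)}$: (1) $$\deg^p_A(\sigma_j^{(q)})=\sum_{q'=p}^{\dim K}\sum_{k=1}^{f_{q'}} adj^p(\sigma_j^{(q)},\sigma_k^{(q')});$$ (2) $$\deg^{p^*}_A(\sigma_j^{(q)})=\deg^p_A(\sigma_j^{(q)})-\sum_{q'=p}^{\dim K}\sum_{k=1}^{f_{q'}}\Delta_{q',k},$$ where $$\Delta_{q',k}=\min\Big(1,\sum_{q''=q'+1}^{\dim K}\sum_{\ell=1}^{f_{q''}}|\operatorname{sig}_L(\sigma^{(q')}_k,\sigma_\ell^{(q'')};\sigma_k^{(q')})|\cdot adj^p(\sigma_j^{(q)},\sigma_\ell^{(q'')})\Big)\cdot adj^p(\sigma_j^{(q)},\sigma_k^{(q')}).$$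
   Context: $K$ is a finite abstract simplicial complex (finite family of nonempty finite vertex sets closed under nonempty subsets); a $q$-simplex has $q+1$ vertices; a face is a simplex of $K$ contained in a given simplex (a simplex is a face of itself); $\dim K$ is the maximal dimension of a simplex. Adjacencies: $\sigma^{(q)}\sim_{L_p}\sigma^{(q')}$ iff they have a common $p$-face; $\sigma^{(q)}\sim_{L_{p^*}}\sigma^{(q')}$ iff $\sigma^{(q)}\sim_{L_p}\sigma^{(q')}$ and $\sigma^{(q)}\not\sim_{L_{p+1}}\sigma^{(q')}$; $\sigma^{(q)}\sim_{U_p}\sigma^{(q')}$ iff some $p$-simplex of $K$ contains both. $p$-adjacency: $\sigma^{(q)}\sim_{A_p}\sigma^{(q')}$ iff $\sigma^{(q)}\sim_{L_{p^*}}\sigma^{(q')}$ and $\sigma^{(q)}\not\sim_{U_{p'}}\sigma^{(q')}$, where $p'=q+q'-p$. Maximal $p$-adjacency: $\sigma^{(q')}\sim_{A_{p^*}}\sigma^{(q)}$ iff $\sigma^{(q')}\sim_{A_p}\sigma^{(q)}$ and $\sigma^{(q')}\not\subset\sigma^{(q'')}$ for every simplex $\sigma^{(q'')}$ with $\sigma^{(q'')}\sim_{A_p}\sigma^{(q)}$. The $p$-adjacency degree is $\deg^p_A(\sigma^{(q)})=\#\{\sigma^{(q')}:\sigma^{(q)}\sim_{A_p}\sigma^{(q')}\}$ and the maximal $p$-adjacency degree is $\deg^{p^*}_A(\sigma^{(q)})=\#\{\sigma^{(q')}:\sigma^{(q')}\sim_{A_{p^*}}\sigma^{(q)}\}$ (over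 simplices of all dimensions $q'$). Indicator quantities: $m_L^p(\sigma,\sigma')=1$ if $\sigma,\sigma'$ have a common $p$-face and $0$ otherwise (equivalently $\min(1,\sum_i|\operatorname{sig}_L(\sigma,\sigma';\gamma_i^{(p)})|)$ over all $p$-simplices $\gamma_i^{(p)}$); $m_U^{p}(\sigma,\sigma')=1$ if some $p$-simplex contains both and $0$ otherwise. For $\sigma=\sigma^{(q)}$, $\sigma'=\sigma^{(q')}$ and $p'=q+q'-p$, $adj^p(\sigma,\sigma')=m^p_L(\sigma,\sigma')\big(1-m^{p+1}_L(\sigma,\sigma')\big)\big(1-m^{p'}_U(\sigma,\sigma')\big)$. Here $|\operatorname{sig}_L(\sigma,\sigma';\tau)|$ equals $1$ if $\tau\subseteq\sigma\cap\sigma'$ and $0$ otherwise; in particular $|\operatorname{sig}_L(\sigma_k^{(q')},\sigma_\ell^{(q'')};\sigma_k^{(q')})|=1$ iff $\sigma_k^{(q')}\subseteq\sigma_\ell^{(q'')}$. *)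

(* Defs.v *)
From mathcomp Require Import all_boot all_order all_algebra.
Set Implicit Arguments. Unset Strict Implicit. Unset Printing Implicit Defensive.

Section Complex.
Variable T : finType.
Implicit Types (K : {set {set T}}) (s t u : {set T}).

Definition is_complex K : Prop :=
  set0 \notin K /\
  (forall s t, s \in K -> t \subset s -> t != set0 -> t \in K).

Definition sdim s : nat := #|s|.-1.
Definition dimK K : nat := \max_(s in K) sdim s.

Definition is_qsimplex K q s : bool := (s \in K) && (#|s| == q.+1).

Definition mL K p s s' : bool :=
  [exists t in K, (#|t| == p.+1) && (t \subset s) && (t \subset s')].
Definition mU K p s s' : bool :=
  [exists t in K, (#|t| == p.+1) && (s \subset t) && (s' \subset t)].

Definition pprime p s s' : nat := sdim s + sdim s' - p.

Definition adjA K p s s' : bool :=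
  mL K p s s' && ~~ mL K p.+1 s s' && ~~ mU K (pprime p s s') s s'.

Definition adjAstar K p s' s : bool :=
  adjA K p s' s &&
  [forall s'' in K, adjA K p s'' s ==> ~~ (s' \proper s'')].

Definition degA K p s : nat := #|[set s' in K | adjA K p s s']|.
Definition degAstar K p s : nat := #|[set s' in K | adjAstar K p s' s]|.

Definition adjp K p s s' : nat :=
  (mL K p s s' : nat) * (1 - mL K p.+1 s s') * (1 - mU K (pprime p s s') s s').
Definition sigL s s' (tau : {set T}) : nat := tau \subset s :&: s'.

Definition Delta K p s t : nat :=
  let q' := sdim t in
  minn 1 (\sum_(q'.+1 <= q'' < (dimK K).+1)
            \sum_(u in K | #|u| == q''.+1) sigL t u t * adjp K p s u)
  * adjp K p s t.
End Complex.

(* Main.v *)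
Require Import Defs.
From mathcomp Require Import all_boot all_order all_algebra.
From mathcomp Require Import zify.

Set Implicit Arguments.
Section H.
Variable T : finType.
Implicit Types (K : {set {set T}}) (s t u : {set T}).

Lemma sum_layers K (F : {set T} -> nat) a D :
  \sum_(a <= q < D.+1) \sum_(u in K | #|u| == q.+1) F u =
  \sum_(u in K | a < #|u| <= D.+1) F u.
Proof.
under eq_bigr => q _ do rewrite big_mkcondr /=.
rewrite exchange_big /= [RHS]big_mkcondr /=; apply: eq_bigr => u _.
case: #|u| => [|k]; first by rewrite big1.
rewrite ltnS ltnS.
case H: (a <= k <= D).
  rewrite (bigD1_seq k) /= ?eqxx ?mem_iota ?iota_uniq //; last first.
    by move: H; lia.
  rewrite big1 ?addn0 // => i /negbTE; rewrite eqSS eq_sym => -> //.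
rewrite big_nat big1 // => i /andP [H1 H2]; rewrite eqSS.
case: eqP => // E; subst i; by rewrite H1 /= -ltnS H2 in H.
Qed.

Lemma adjp_adjA K p s t : adjp K p s t = adjA K p s t.
Proof. by rewrite /adjp /adjA; case: (mL _ _ _ _); case: (mL _ _ _ _); case: (mU _ _ _ _). Qed.

Lemma adjA_sym K p s t : adjA K p s t = adjA K p t s.
Proof.
rewrite /adjA /pprime addnC.
have mLs r : mL K r s t = mL K r t s.
  by apply/existsP/existsP => -[x /andP[xK /andP[/andP[c1 c2] c3]]]; exists x; rewrite xK c1 c2 c3.
have mUs r : mU K r s t = mU K r t s.
  by apply/existsP/existsP => -[x /andP[xK /andP[/andP[c1 c2] c3]]]; exists x; rewrite xK c1 c2 c3.
by rewrite !mLs mUs.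
Qed.

Lemma adjA_size K p s t : t \in K -> adjA K p s t -> p < #|t| <= (dimK K).+1.
Proof.
move=> tK /andP [/andP [/existsP [x /andP [xK /andP [/andP [/eqP cx _] xt]]] _] _].
have h : p < #|t| by rewrite -cx subset_leq_card.
rewrite h /=.
have := @leq_bigmax_cond _ (mem K) (@sdim T) t tK.
rewrite /dimK /sdim => le.
by rewrite -(ltn_predK h) ltnS.
Qed.
Arguments adjA_size {K p s t}.

Definition Ex K p s t := [exists u in K, adjA K p s u && (t \proper u)].

Lemma degA_sum K p s : degA K p s = \sum_(t in K) adjA K p s t.
Proof.
rewrite /degA -sum1_card big_mkcond [RHS]big_mkcond; apply: eq_bigr => i _.
by rewrite inE; case: (i \in K); case: adjA.
Qed.

Lemma degAstar_sum K p s :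
  degAstar K p s = \sum_(t in K) (adjA K p s t && ~~ Ex K p s t).
Proof.
rewrite /degAstar -sum1_card big_mkcond [RHS]big_mkcond; apply: eq_bigr => i _.
rewrite inE /adjAstar adjA_sym.
have -> : [forall s'' in K, adjA K p s'' s ==> ~~ (i \proper s'')] = ~~ Ex K p s i.
  apply/forall_inP/negP => [H /exists_inP [u uK /andP[a b]] | H u uK].
    by move: (H u uK); rewrite adjA_sym a b.
  apply/implyP => a; apply/negP => b; apply: H; apply/exists_inP; exists u => //.
  by rewrite -adjA_sym a.
by case: (i \in K); case: adjA; case: Ex.
Qed.

Lemma layers_full K p s (F : {set T} -> nat) :
  (forall t, t \in K -> F t != 0 -> adjA K p s t) ->
  \sum_(p <= q < (dimK K).+1) \sum_(u in K | #|u| == q.+1) F u =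
  \sum_(u in K) F u.
Proof.
move=> HF; rewrite sum_layers big_mkcondr /=.
apply: eq_bigr => u uK; case: ifP => // c.
case: (F u =P 0) => // /eqP /(HF _ uK) /(adjA_size uK).
by rewrite c.
Qed.

Lemma Delta_eq K p s t : t \in K ->
  Delta K p s t = (adjA K p s t && Ex K p s t).
Proof.
move=> tK; rewrite /Delta adjp_adjA.
case At: (adjA K p s t); last by rewrite muln0.
rewrite muln1 /=.
have ht : (sdim t).+1 = #|t|.
  by have /andP[h _] := adjA_size tK At; rewrite /sdim (ltn_predK h).
rewrite sum_layers ht.
case: (boolP (Ex K p s t)) => [/exists_inP [u uK /andP [Au tu]] | nE].
  rewrite (bigD1 u) /=; last first.
    rewrite uK /=; have /andP[_ ->] := adjA_size uK Au.
    by move: tu; rewrite properEcard => /andP[_ ->].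
  rewrite /sigL subsetIidl adjp_adjA Au.
  move: tu; rewrite properEcard => /andP [-> _] /=.
  by rewrite mul1n add1n; apply/minn_idPl.
rewrite big1 //= => v /andP [vK /andP [c _]].
rewrite /sigL subsetIidl adjp_adjA.
case tu: (t \subset v); case Av: (adjA K p s v) => //.
case/negP: nE; apply/exists_inP; exists v => //.
by rewrite Av properEcard tu c.
Qed.
End H.

Import GRing.Theory.
Local Open Scope ring_scope.

Theorem theoremt (T : finType) (K : {set {set T}}) (q p : nat) (s : {set T}) :
  is_complex K -> is_qsimplex K q s ->
  (degA K p s =
     \sum_(p <= q' < (dimK K).+1) \sum_(t in K | #|t| == q'.+1) adjp K p s t)%N /\
  ((degAstar K p s)%:Z =
     (degA K p s)%:Z -
     (\sum_(p <= q' < (dimK K).+1) \sum_(t in K | #|t| == q'.+1) Delta K p s t)%:Z).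
Proof.
move=> _ _.
have L1 : (degA K p s =
     \sum_(p <= q' < (dimK K).+1) \sum_(t in K | #|t| == q'.+1) adjp K p s t)%N.
  rewrite (@layers_full T K p s (adjp K p s)); last by move=> t _; rewrite adjp_adjA; case: adjA.
  by rewrite degA_sum; apply: eq_bigr => t _; rewrite adjp_adjA.
split => //.
rewrite (@layers_full T K p s (Delta K p s)); last first.
  by move=> t tK; rewrite Delta_eq //; case: adjA.
have -> : (degA K p s = degAstar K p s + \sum_(t in K) Delta K p s t)%N.
  rewrite degA_sum degAstar_sum -big_split /=; apply: eq_bigr => t tK.
  by rewrite Delta_eq //; case: adjA; case: Ex.
by rewrite PoszD addrK.
Qed.
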